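(* Consider the decentralized Thompson Sampling algorithm for Bernoulli rewards described in the context, with any learning rate $\eta>0$. Let $k\in\{2,\dots,K\}$ and fix thresholds $\mu_k<x_k<y_k<\mu_1$. Then for every $T\ge1$, \[ \sum_{i=1}^N\mathbb E\left[\sum_{t=1}^T\mathbf 1\{A^{(i)}_t=k,\ E^{(i)}_k(t),\ \widetilde E^{(i)}_k(t)\}\right]\le\sum_{i=1}^N\mathbb E\left[\sum_{t=1}^T\left(\frac1{G^{(i)}_{1,t}}-1\right)\mathbf 1\{A^{(i)}_t=1\}\right]. \]
   Context: $N$ agents on a connected undirected graph; $W\in\mathbb R^{N\times N}$ doubly stochastic with nonnegative entries, $W_{ij}>0$ for $i\ne j$ iff $\{i,j\}$ is an edge. $K$ arms with Bernoulli rewards of means $\mu_1>\mu_2\ge\cdots\ge\mu_K$, independent across agents, rounds, arms. Decentralized Thompson Sampling with learning rate $\eta$ and prior $\mathrm{Beta}(1,1)$: agent $i$ maintains $\alpha^{(i)}_k(t),\beta^{(i)}_k(t)$ with $\alpha^{(i)}_k(1)=\beta^{(i)}_k(1)=1$; its posterior for arm $k$ at round $t$ is $Q^{(i)}_{k,t}=\mathrm{Beta}(\alpha^{(i)}_k(t),\beta^{(i)}_k(t))$. In round $t$, agent $i$ draws $\theta^{(i)}_k(t)\sim Q^{(i)}_{k,t}$ independently over $k$, plays $A^{(i)}_t\in\arg\max_k\theta^{(i)}_k(t)$, observes reward $Y^{(i)}_t$, sets $\tilde\alpha^{(i)}_k=\alpha^{(i)}_k(t)+\eta Y^{(i)}_t\mathbf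 1\{A^{(i)}_t=k\}$, $\tilde\beta^{(i)}_k=\beta^{(i)}_k(t)+\eta(1-Y^{(i)}_t)\mathbf 1\{A^{(i)}_t=k\}$, and then $\alpha^{(i)}_k(t+1)=\sum_j W_{ij}\tilde\alpha^{(j)}_k$, $\beta^{(i)}_k(t+1)=\sum_j W_{ij}\tilde\beta^{(j)}_k$. Notation: $\hat\mu^{(i)}_k(t)=\frac{\alpha^{(i)}_k(t)-1}{\alpha^{(i)}_k(t)+\beta^{(i)}_k(t)-2}$, $E^{(i)}_k(t)=\{\hat\mu^{(i)}_k(t)\le x_k\}$, $\widetilde E^{(i)}_k(t)=\{\theta^{(i)}_k(t)\le y_k\}$. $G^{(i)}_{1,t}=Q^{(i)}_{1,t}\big((y_k,1]\big)$, i.e. the probability that a $\mathrm{Beta}(\alpha^{(i)}_1(t),\beta^{(i)}_1(t))$ random variable exceeds $y_k$. *)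

(* Defs.v *)
From mathcomp Require Import all_boot all_order all_algebra.
From mathcomp Require Import all_classical all_reals all_analysis.
Set Implicit Arguments. Unset Strict Implicit. Unset Printing Implicit Defensive.
Import Order.TTheory GRing.Theory Num.Theory.
Local Open Scope classical_set_scope.
Local Open Scope ring_scope.

Definition beta_kernel {R : realType} (a b x : R) : R :=
  x `^ (a - 1) * (1 - x) `^ (b - 1).

Definition beta_fun {R : realType} (a b : R) : R :=
  Rintegral lebesgue_measure `[0%R, 1%R] (beta_kernel a b).

Definition beta_pdf {R : realType} (a b x : R) : R :=
  beta_kernel a b x / beta_fun a b.

Definition beta_prob {R : realType} (a b : R) (A : set R) : R :=
  Rintegral lebesgue_measure (A `&` `[0%R, 1%R]) (beta_pdf a b).

Section DTS.
Variables (R : realType) (N K : nat).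
(* agents are 'I_N; arms are 'I_K.+1 (paper's arm 1 is ord0, the paper's
   number of arms is K.+1) *)
Notation agent := 'I_N.
Notation arm := 'I_K.+1.

Record state := State { alpha_ : agent -> arm -> R; beta_ : agent -> arm -> R }.

Definition init_state : state := State (fun _ _ => 1) (fun _ _ => 1).

(* record of one round t: state (alpha(t), beta(t)) at the start of the round,
   samples theta^{(i)}_k(t), actions A^{(i)}_t and rewards Y^{(i)}_t *)
Record round := Round {
  r_state : state;
  r_theta : agent -> arm -> R;
  r_act : agent -> arm;
  r_rew : {ffun agent -> bool} }.

(* A^{(i)}_t in argmax_k theta^{(i)}_k(t) (ties broken by a fixed rule) *)
Definition choose (th : agent -> arm -> R) : agent -> arm :=
  fun i => [arg max_(k > ord0) th i k]%O.

(* learning-rate update followed by the gossip step with W *)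
Definition update (W : 'M[R]_N) (eta : R) (s : state) (A : agent -> arm)
  (Y : {ffun agent -> bool}) : state :=
  State
   (fun i k => \sum_j W i j * (alpha_ s j k + eta * (Y j)%:R * (A j == k)%:R))
   (fun i k => \sum_j W i j * (beta_ s j k + eta * (1 - (Y j)%:R) * (A j == k)%:R)).

(* Integral of F(theta) where the coordinates (i,k) in s are drawn
   independently, theta_{i,k} ~ Beta(alpha_i_k, beta_i_k). *)
Fixpoint draw (s : seq (agent * arm)) (st : state)
  (F : (agent -> arm -> R) -> R) (th : agent -> arm -> R) : R :=
  match s with
  | [::] => F th
  | p :: s' =>
      Rintegral lebesgue_measure `[0%R, 1%R]
        (fun x => beta_pdf (alpha_ st p.1 p.2) (beta_ st p.1 p.2) x *
           draw s' st F (fun i k => if (i, k) == p then x else th i k))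
  end.

Definition draw_all (st : state) (F : (agent -> arm -> R) -> R) : R :=
  draw (enum {: agent * arm}) st F (fun _ _ => 0).

(* probability of the reward vector Y given the actions A (independent
   Bernoulli(mu_{A_i}) rewards across agents) *)
Definition rew_prob (mu : arm -> R) (A : agent -> arm) (Y : {ffun agent -> bool}) : R :=
  \prod_i (if Y i then mu (A i) else 1 - mu (A i)).

(* pathE T st F = E[F(rounds 1..T)] when the algorithm is run for T rounds
   starting from state st (the list of rounds is in chronological order). *)
Fixpoint pathE (W : 'M[R]_N) (eta : R) (mu : arm -> R) (T : nat) (st : state)
  (F : seq round -> R) : R :=
  match T with
  | 0 => F [::]
  | T'.+1 =>
      draw_all st (fun th =>
        let A := choose th in
        \sum_(Y : {ffun agent -> bool})
          rew_prob mu A Y *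
          pathE W eta mu T' (update W eta st A Y)
                (fun rest => F (Round st th A Y :: rest)))
  end.

Definition muhat (st : state) (i : agent) (k : arm) : R :=
  (alpha_ st i k - 1) / (alpha_ st i k + beta_ st i k - 2).

Definition G1 (st : state) (i : agent) (y : R) : R :=
  beta_prob (alpha_ st i ord0) (beta_ st i ord0) `]y, 1%R].

End DTS.

Definition gossip_matrix {R : realType} {N : nat} (e : rel 'I_N) (W : 'M[R]_N) : Prop :=
  [/\ symmetric e, irreflexive e & (forall i j, connect e i j)] /\
  [/\ (forall i j, 0 <= W i j),
      (forall i, \sum_j W i j = 1), (forall j, \sum_i W i j = 1)
    & (forall i j, i != j -> (0 < W i j <-> e i j))].

(* Main.v *)
Require Import Defs.
From mathcomp Require Import all_boot all_order all_algebra.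
From mathcomp Require Import all_classical all_reals all_analysis.
Import Order.TTheory GRing.Theory Num.Theory.
Local Open Scope classical_set_scope.
Local Open Scope ring_scope.
From mathcomp Require Import lra measurable_realfun.
Set Implicit Arguments. Unset Strict Implicit. Unset Printing Implicit Defensive.
Import Order.TTheory GRing.Theory Num.Theory.
Local Open Scope classical_set_scope.
Local Open Scope ring_scope.

Section Beta.
Variable R : realType.
Notation leb := (@lebesgue_measure R).

Lemma intg01 (h : R -> R) (c : R) : measurable_fun setT h ->
  (forall z, 0 <= z <= 1 -> `|h z| <= c) ->
  leb.-integrable `[0%R, 1%R] (EFin \o h).
Proof.
move=> mh hc; apply: measurable_bounded_integrable => //.
- have := lebesgue_measure_itv `[0%R, 1%R]; rewrite /= => ->.
  by rewrite lte_fin ltr01 oppr0 adde0 ltry.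
- exact: measurable_funS mh.
- exists c; split; first exact: num_real.
  move=> M cM z; rewrite /= in_itv/= => zz.
  by apply: le_trans (hc _ zz) (ltW cM).
Qed.

Lemma kernel_ge0 (a b z : R) : 0 <= beta_kernel a b z.
Proof. by rewrite /beta_kernel mulr_ge0 // powR_ge0. Qed.

Lemma powR_le1' (z p : R) : 0 <= p -> 0 <= z <= 1 -> z `^ p <= 1.
Proof.
move=> p0 /andP[z0 z1].
have -> : (1 : R) = 1 `^ p by rewrite powR1.
by apply: ge0_ler_powR; rewrite ?nnegrE.
Qed.

Lemma kernel_le1 (a b z : R) : 1 <= a -> 1 <= b -> 0 <= z <= 1 -> beta_kernel a b z <= 1.
Proof.
move=> a1 b1 /andP[z0 z1]; rewrite /beta_kernel.
rewrite mulr_ile1 ?powR_ge0 //; apply: powR_le1'; rewrite ?subr_ge0 //; lra.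
Qed.

Lemma kernel_meas (a b : R) : measurable_fun setT (beta_kernel a b).
Proof.
apply: measurable_funM; first exact: measurable_powR.
rewrite (_ : (fun x => _) = (@powR R ^~ (b - 1)) \o (fun x : R => 1 - x))//.
apply: measurableT_comp; first exact: measurable_powR.
exact: measurable_funB.
Qed.

Lemma kernel_lb (a b u v z : R) : 1 <= a -> 1 <= b -> 0 < u -> u <= z -> z <= v -> v < 1 ->
  u `^ (a - 1) * (1 - v) `^ (b - 1) <= beta_kernel a b z.
Proof.
move=> a1 b1 u0 uz zv v1; rewrite /beta_kernel.
apply: ler_pM; rewrite ?powR_ge0 //.
  by apply: ge0_ler_powR; rewrite ?nnegrE ?subr_ge0 //; lra.
by apply: ge0_ler_powR; rewrite ?nnegrE ?subr_ge0 //; lra.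
Qed.

Lemma intZl (D : set R) (k : R) (f : R -> R) : measurable D ->
  leb.-integrable D (EFin \o f) -> leb.-integrable D (EFin \o (fun x => k * f x)).
Proof.
move=> mD fi; rewrite (_ : EFin \o _ = fun x => (k%:E * (EFin \o f) x)%E).
  exact: integrableZl.
by apply/funext => x; rewrite /= EFinM.
Qed.

Lemma int_pos (h : R -> R) (c k u v : R) : measurable_fun setT h ->
  (forall z, 0 <= z <= 1 -> 0 <= h z <= c) ->
  0 < k -> 0 <= u -> u < v -> v <= 1 ->
  (forall z, u <= z <= v -> k <= h z) ->
  0 < Rintegral leb `[0%R, 1%R] h.
Proof.
move=> mh hb k0 u0 uv v1 hk.
have mI : measurable (`[u, v] : set R) by [].
have int1 : leb.-integrable `[0%R, 1%R] (EFin \o \1_(`[u, v] : set R)).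
  apply: (@intg01 _ 1); first exact: measurable_indic.
  by move=> z _; rewrite indicE; case: (_ \in _); rewrite ?normr1 ?normr0.
have inth : leb.-integrable `[0%R, 1%R] (EFin \o h).
  apply: (@intg01 _ c) => // z zz; have /andP[h0 hc] := hb z zz.
  by rewrite ger0_norm.
apply: (@lt_le_trans _ _ (Rintegral leb `[0%R, 1%R] (fun z => k * \1_(`[u, v] : set R) z))).
  rewrite RintegralZl //.
  rewrite /Rintegral integral_indic //.
  rewrite (_ : [set` `[u, v]] `&` [set` `[0%R, 1%R]] = [set` `[u, v]]); last first.
    apply/seteqP; split => z /=; rewrite !in_itv /=.
      by case=> ->.
    move=> /andP[uz zv]; split; first by rewrite uz zv.
    apply/andP; split; lra.
  have := lebesgue_measure_itv `[u, v]; rewrite /= lte_fin uv => ->.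
  rewrite -EFinD /=; apply: mulr_gt0 => //; lra.
apply: le_Rintegral => //.
  exact: intZl.
move=> z; rewrite /= in_itv /= => zz; rewrite indicE.
case: (boolP (_ \in _)) => zI /=.
  rewrite mulr1; apply: hk; move: zI; by rewrite inE /= in_itv.
by rewrite mulr0; case/andP: (hb z zz).
Qed.

Lemma beta_fun_gt0 (a b : R) : 1 <= a -> 1 <= b -> 0 < Defs.beta_fun a b.
Proof.
move=> a1 b1; rewrite /Defs.beta_fun.
apply: (@int_pos _ 1 ((1/3) `^ (a - 1) * (1 - 2/3) `^ (b - 1)) (1/3) (2/3)).
- exact: kernel_meas.
- by move=> z zz; rewrite kernel_ge0 kernel_le1.
- by rewrite mulr_gt0 // powR_gt0 //; lra.
- lra.
- lra.
- lra.
- move=> z /andP[uz zv]; apply: kernel_lb => //; lra.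
Qed.

Definition bok (a b : R) := 1 <= a /\ 1 <= b.

Lemma pdf_ge0 (a b z : R) : bok a b -> 0 <= Defs.beta_pdf a b z.
Proof.
case=> a1 b1; rewrite /Defs.beta_pdf divr_ge0 ?kernel_ge0 //.
exact/ltW/beta_fun_gt0.
Qed.

Lemma pdf_le (a b z : R) : bok a b -> 0 <= z <= 1 ->
  Defs.beta_pdf a b z <= (Defs.beta_fun a b)^-1.
Proof.
case=> a1 b1 zz; rewrite /Defs.beta_pdf ler_pdivrMr ?beta_fun_gt0 //.
by rewrite mulVf ?kernel_le1 // gt_eqF // beta_fun_gt0.
Qed.

Lemma pdf_meas (a b : R) : measurable_fun setT (Defs.beta_pdf a b).
Proof.
apply: measurable_funM; first exact: kernel_meas.
exact: measurable_cst.
Qed.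

Definition Ex (a b : R) (h : R -> R) :=
  Rintegral leb `[0%R, 1%R] (fun z => Defs.beta_pdf a b z * h z).

Definition bnd01 (h : R -> R) := exists c : R, forall z, 0 <= z <= 1 -> `|h z| <= c.

Lemma Ex_int (a b : R) (h : R -> R) : bok a b -> measurable_fun setT h -> bnd01 h ->
  leb.-integrable `[0%R, 1%R] (EFin \o (fun z => Defs.beta_pdf a b z * h z)).
Proof.
move=> ab mh [c hc]; apply: (@intg01 _ ((Defs.beta_fun a b)^-1 * c)).
  by apply: measurable_funM => //; exact: pdf_meas.
move=> z zz; rewrite normrM ger0_norm ?pdf_ge0 //.
by apply: ler_pM; rewrite ?pdf_ge0 ?pdf_le ?hc.
Qed.

Lemma Ex_cst (a b c : R) : bok a b -> Ex a b (fun _ => c) = c.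
Proof.
case=> a1 b1; rewrite /Ex RintegralZr //; last first.
  apply: (@intg01 _ ((Defs.beta_fun a b)^-1)); first exact: pdf_meas.
  by move=> z zz; rewrite ger0_norm ?pdf_ge0 ?pdf_le.
rewrite /Defs.beta_pdf RintegralZr //; last first.
  apply: (@intg01 _ 1); first exact: kernel_meas.
  by move=> z zz; rewrite ger0_norm ?kernel_ge0 ?kernel_le1.
by rewrite -/(Defs.beta_fun a b) mulfV ?mul1r // gt_eqF // beta_fun_gt0.
Qed.

Lemma Ex_D (a b : R) (h1 h2 : R -> R) : bok a b ->
  measurable_fun setT h1 -> bnd01 h1 -> measurable_fun setT h2 -> bnd01 h2 ->
  Ex a b (fun z => h1 z + h2 z) = Ex a b h1 + Ex a b h2.
Proof.
move=> ab m1 b1 m2 b2; rewrite /Ex -RintegralD //; try exact: Ex_int.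
by apply: eq_Rintegral => z _; rewrite mulrDr.
Qed.

Lemma Ex_Z (a b k : R) (h : R -> R) : bok a b ->
  measurable_fun setT h -> bnd01 h ->
  Ex a b (fun z => k * h z) = k * Ex a b h.
Proof.
move=> ab m1 b1; rewrite /Ex -RintegralZl //; last exact: Ex_int.
by apply: eq_Rintegral => z _; rewrite mulrCA.
Qed.

Lemma Ex_le (a b : R) (h1 h2 : R -> R) : bok a b ->
  measurable_fun setT h1 -> bnd01 h1 -> measurable_fun setT h2 -> bnd01 h2 ->
  (forall z, 0 <= z <= 1 -> h1 z <= h2 z) ->
  Ex a b h1 <= Ex a b h2.
Proof.
move=> ab m1 b1 m2 b2 h12; rewrite /Ex; apply: le_Rintegral => //; try exact: Ex_int.
move=> z; rewrite /= in_itv /= => zz.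
by apply: ler_wpM2l; rewrite ?pdf_ge0 ?h12.
Qed.

Lemma Ex_ge0 (a b : R) (h : R -> R) : bok a b ->
  (forall z, 0 <= z <= 1 -> 0 <= h z) -> 0 <= Ex a b h.
Proof.
move=> ab h0; apply: Rintegral_ge0 => z; rewrite /= in_itv /= => zz.
by rewrite mulr_ge0 ?pdf_ge0 ?h0.
Qed.
End Beta.


Section Meas.
Variable R : realType.
Notation leb := (@lebesgue_measure R).

Lemma meas_param d (X : measurableType d) (G : X -> R -> R) :
  measurable_fun setT (fun xz : X * R => G xz.1 xz.2) ->
  (forall x z, 0 <= G x z) ->
  measurable_fun setT (fun x => Rintegral leb `[0%R, 1%R] (G x)).
Proof.
move=> mG G0.
pose f := fun xz : X * R => ((G xz.1 xz.2) * \1_(`[0%R, 1%R] : set R) xz.2)%:E.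
have -> : (fun x => Rintegral leb `[0%R, 1%R] (G x)) = fine \o fubini_F leb f.
  apply/funext => x; rewrite Rintegral_mkcond /= /Rintegral /fubini_F /f /=.
  congr fine; apply: eq_integral => z _; congr EFin.
  by rewrite /patch indicE; case: (z \in _); rewrite ?mulr1 ?mulr0.
apply: (measurableT_comp (fine_measurable _)) => //.
apply: measurable_fun_fubini_tonelli_F.
  apply/measurable_EFinP; apply: measurable_funM => //.
  apply: measurableT_comp; first exact: measurable_indic.
  exact: measurable_snd.
by move=> xz; rewrite /f lee_fin mulr_ge0 // indicE.
Qed.
End Meas.

Section Nice.
Variables (R : realType) (N K : nat).
Notation Th := ('I_N -> 'I_K.+1 -> R).

Definition adm d (X : measurableType d) (phi : X -> Th) :=
  forall i k, measurable_fun setT (fun x => phi x i k).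

Definition Nice (F : Th -> R) := forall d (X : measurableType d) (phi : X -> Th),
  adm phi -> measurable_fun setT (F \o phi).

Definition NiceP (P : Th -> bool) := forall d (X : measurableType d) (phi : X -> Th),
  adm phi -> measurable [set x | P (phi x)].

Lemma NiceP_ext P Q : NiceP P -> (forall t, P t = Q t) -> NiceP Q.
Proof.
move=> hP PQ d X phi ad; have := hP d X phi ad.
by congr measurable; apply/seteqP; split => x /=; rewrite PQ.
Qed.

Lemma NiceP_le i k i' k' : NiceP (fun t => t i k <= t i' k').
Proof.
move=> d X phi ad; rewrite -[X in measurable X]setTI.
exact: measurable_fun_le.
Qed.

Lemma NiceP_lec i k (c : R) : NiceP (fun t => t i k <= c).
Proof.
move=> d X phi ad; rewrite -[X in measurable X]setTI.
by apply: measurable_fun_le => //; exact: measurable_cst.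
Qed.

Lemma NiceP_not P : NiceP P -> NiceP (fun t => ~~ P t).
Proof.
move=> hP d X phi ad.
rewrite (_ : [set x | ~~ P (phi x)] = ~` [set x | P (phi x)]).
  exact/measurableC/hP.
by apply/seteqP; split => x /=; case: (P _).
Qed.

Lemma NiceP_and P Q : NiceP P -> NiceP Q -> NiceP (fun t => P t && Q t).
Proof.
move=> hP hQ d X phi ad.
rewrite (_ : [set x | P (phi x) && Q (phi x)] = [set x | P (phi x)] `&` [set x | Q (phi x)]).
  by apply: measurableI; [exact: hP | exact: hQ].
by apply/seteqP; split => x /=; [move/andP | move=> [-> ->]].
Qed.

Lemma NiceP_cst b : NiceP (fun _ => b).
Proof.
move=> d X phi ad; case: b.
  by rewrite (_ : [set _ | true] = setT) //; apply/seteqP; split.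
by rewrite (_ : [set _ | false] = set0) //; apply/seteqP; split.
Qed.

Lemma NiceP_or P Q : NiceP P -> NiceP Q -> NiceP (fun t => P t || Q t).
Proof.
move=> hP hQ.
apply: NiceP_ext (NiceP_not (NiceP_and (NiceP_not hP) (NiceP_not hQ))) _.
by move=> t; rewrite negb_and !negbK.
Qed.

Lemma NiceP_eqb P Q : NiceP P -> NiceP Q -> NiceP (fun t => P t == Q t).
Proof.
move=> hP hQ.
apply: NiceP_ext (NiceP_or (NiceP_and hP hQ) (NiceP_and (NiceP_not hP) (NiceP_not hQ))) _.
by move=> t; case: (P t); case: (Q t).
Qed.

Lemma NiceP_all (J : eqType) (s : seq J) (P : J -> Th -> bool) :
  (forall j, NiceP (P j)) -> NiceP (fun t => all (fun j => P j t) s).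
Proof.
move=> hP; elim: s => [|j s IH] /=; first exact: NiceP_cst.
exact: NiceP_and.
Qed.

Lemma NiceP_forall (J : finType) (P : J -> Th -> bool) :
  (forall j, NiceP (P j)) -> NiceP (fun t => [forall j, P j t]).
Proof.
move=> hP d X phi ad; have := NiceP_all (enum J) hP ad.
congr measurable; apply/seteqP; split => x /=.
  by move/allP => H; apply/forallP => j; apply: H; rewrite mem_enum.
by move/forallP => H; apply/allP => j _; apply: H.
Qed.

Lemma NiceP_exists (J : finType) (P : J -> Th -> bool) :
  (forall j, NiceP (P j)) -> NiceP (fun t => [exists j, P j t]).
Proof.
move=> hP.
apply: NiceP_ext (NiceP_not (NiceP_forall (fun j => NiceP_not (hP j)))) _.
move=> t; rewrite negb_forall; apply: eq_existsb => j; exact: negbK.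
Qed.


Lemma Nice_ext F G : Nice F -> (forall t, F t = G t) -> Nice G.
Proof.
move=> hF FG d X phi ad; have := hF d X phi ad.
by rewrite (_ : F \o phi = G \o phi) //; apply/funext => x /=.
Qed.

Lemma Nice_ind P : NiceP P -> Nice (fun t => (P t)%:R).
Proof.
move=> hP d X phi ad.
rewrite (_ : _ \o _ = \1_[set x | P (phi x)]).
  by apply: measurable_indic; exact: hP.
apply/funext => x /=; rewrite indicE.
have [Px|Px] := boolP (P (phi x)); first by rewrite mem_set.
by rewrite memNset //= (negbTE Px).
Qed.

Lemma Nice_cst c : Nice (fun _ => c).
Proof. by move=> d X phi ad; exact: measurable_cst. Qed.

Lemma Nice_add F G : Nice F -> Nice G -> Nice (fun t => F t + G t).
Proof. by move=> hF hG d X phi ad; apply: measurable_funD; [exact: hF | exact: hG]. Qed.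

Lemma Nice_mul F G : Nice F -> Nice G -> Nice (fun t => F t * G t).
Proof. by move=> hF hG d X phi ad; apply: measurable_funM; [exact: hF | exact: hG]. Qed.

Lemma Nice_sum (J : Type) (s : seq J) (F : J -> Th -> R) :
  (forall j, Nice (F j)) -> Nice (fun t => \sum_(j <- s) F j t).
Proof.
move=> hF; elim: s => [|j s IH].
  by apply: Nice_ext (Nice_cst 0) _ => t; rewrite big_nil.
by apply: Nice_ext (Nice_add (hF j) IH) _ => t; rewrite big_cons.
Qed.

Lemma Nice_coord (h : R -> R) i k : measurable_fun setT h -> Nice (fun t => h (t i k)).
Proof. by move=> mh d X phi ad; apply: measurableT_comp mh (ad i k). Qed.

Definition Mx (t : Th) i k := [forall j, t i j <= t i k].

Lemma chooseE (t : Th) i : Defs.choose t i = odflt ord0 [pick k | Mx t i k].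
Proof.
by rewrite /Defs.choose /Order.arg_max /extremum; congr odflt.
Qed.

Lemma NiceP_Mx i k : NiceP (fun t => Mx t i k).
Proof. by apply: NiceP_forall => j; exact: NiceP_le. Qed.

Lemma NiceP_choose i a : NiceP (fun t => Defs.choose t i == a).
Proof.
apply: (NiceP_ext (P := fun t => [exists B : {set 'I_K.+1},
   (odflt ord0 [pick k in B] == a) && [forall k, Mx t i k == (k \in B)]])).
  apply: NiceP_exists => B; apply: NiceP_and; first exact: NiceP_cst.
  apply: NiceP_forall => k; apply: NiceP_eqb; [exact: NiceP_Mx | exact: NiceP_cst].
move=> t; rewrite chooseE; apply/existsP/idP.
  case=> B /andP[/eqP <- /forallP HB]; apply/eqP; congr odflt.
  by apply: eq_pick => k /=; rewrite (eqP (HB k)).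
move=> /eqP <-; exists (finset (fun k => Mx t i k)); apply/andP; split.
  by apply/eqP; congr odflt; apply: eq_pick => k /=; rewrite inE.
by apply/forallP => k; rewrite inE.
Qed.

Lemma Nice_choose (Psi : ('I_N -> 'I_K.+1) -> R) : Nice (fun t => Psi (Defs.choose t)).
Proof.
apply: (Nice_ext (F := fun t => \sum_(a : {ffun 'I_N -> 'I_K.+1})
   Psi a * ([forall i, Defs.choose t i == a i])%:R)).
  apply: Nice_sum => a; apply: Nice_mul; first exact: Nice_cst.
  by apply: Nice_ind; apply: NiceP_forall => i; exact: NiceP_choose.
move=> t; rewrite (bigD1 [ffun i => Defs.choose t i]) //= big1 ?addr0.
  rewrite (_ : [forall i, _] = true) ?mulr1.
    by congr Psi; apply/funext => i; rewrite ffunE.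
  by apply/forallP => i; rewrite ffunE.
move=> a aF; rewrite (_ : [forall i, _] = false) ?mulr0 //.
apply/negbTE/negP => /forallP H; move/eqP: aF; apply.
by apply/ffunP => i; rewrite ffunE (eqP (H i)).
Qed.

End Nice.


Section Draw.
Variables (R : realType) (N K : nat).
Notation Th := ('I_N -> 'I_K.+1 -> R).
Notation leb := (@lebesgue_measure R).
Variable st : state R N K.
Hypothesis vst : forall i k, bok (alpha_ st i k) (beta_ st i k).

Definition upd (t : Th) (p : 'I_N * 'I_K.+1) (x : R) : Th :=
  fun i k => if (i, k) == p then x else t i k.

Definition Exp (p : 'I_N * 'I_K.+1) h := Ex (alpha_ st p.1 p.2) (beta_ st p.1 p.2) h.

Lemma drawE p s F t : draw (p :: s) st F t = Exp p (fun x => draw s st F (upd t p x)).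
Proof. by []. Qed.

Definition good (F : Th -> R) := [/\ Nice F, forall t, 0 <= F t & exists c, forall t, F t <= c].

Lemma adm_upd_R t p : adm (fun x : R => upd t p x).
Proof.
move=> i k; rewrite /upd; case: ((i, k) == p).
  exact: measurable_id.
exact: measurable_cst.
Qed.

Lemma adm_upd_prod d (X : measurableType d) (phi : X -> Th) p :
  adm phi -> adm (fun xz : X * R => upd (phi xz.1) p xz.2).
Proof.
move=> ad i k; rewrite /upd; case: ((i, k) == p).
  exact: measurable_snd.
by apply: measurableT_comp (ad i k) _; exact: measurable_fst.
Qed.

Lemma vstp p : bok (alpha_ st p.1 p.2) (beta_ st p.1 p.2).
Proof. exact: vst. Qed.

Lemma good_meas F t p : good F -> measurable_fun setT (fun x => F (upd t p x)).
Proof. by case=> nF _ _; exact: (nF _ _ _ (adm_upd_R t p)). Qed.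

Lemma good_bnd F t p : good F -> bnd01 (fun x => F (upd t p x)).
Proof.
case=> _ F0 [c Fc]; exists c => z _.
by rewrite ger0_norm.
Qed.

Lemma draw_good s F : good F -> good (fun t => draw s st F t).
Proof.
move=> gF; elim: s => [|p s IH].
  by case: gF => nF F0 Fc; split => //; apply: Nice_ext nF _.
split.
- move=> d X phi ad /=.
  apply: (meas_param (G := fun x z => Defs.beta_pdf (alpha_ st p.1 p.2) (beta_ st p.1 p.2) z *
      draw s st F (upd (phi x) p z))).
    apply: measurable_funM.
      by apply: measurableT_comp (pdf_meas _ _) _; exact: measurable_snd.
    by case: IH => nF _ _; exact: (nF _ _ _ (adm_upd_prod p ad)).
  by move=> x z; apply: mulr_ge0; [apply: pdf_ge0; exact: vstp | case: IH].
- move=> t; rewrite drawE; apply: Ex_ge0; first exact: vstp.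
  by move=> z _; case: IH.
- have IH' := IH; case: IH' => nF F0 [c Fc]; exists c => t; rewrite drawE.
  rewrite -[X in _ <= X](@Ex_cst _ (alpha_ st p.1 p.2) (beta_ st p.1 p.2) c (vstp p)).
  apply: Ex_le; first exact: vstp.
  + exact: (good_meas t p IH).
  + exact: (good_bnd t p IH).
  + exact: measurable_cst.
  + by exists `|c| => z _.
  + by move=> z _.
Qed.


Lemma good_add F G : good F -> good G -> good (fun t => F t + G t).
Proof.
case=> nF F0 [c Fc] [nG G0 [c' Gc]]; split.
- exact: Nice_add.
- by move=> t; rewrite addr_ge0.
- by exists (c + c') => t; rewrite lerD.
Qed.

Lemma good_cst c : 0 <= c -> good (fun _ => c).
Proof. by move=> c0; split => //; [exact: Nice_cst | exists c]. Qed.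

Lemma good_ext F G : good F -> (forall t, F t = G t) -> good G.
Proof.
case=> nF F0 [c Fc] FG; split.
- exact: Nice_ext nF FG.
- by move=> t; rewrite -FG.
- by exists c => t; rewrite -FG.
Qed.

Lemma good_sum (J : Type) (r : seq J) (F : J -> Th -> R) :
  (forall j, good (F j)) -> good (fun t => \sum_(j <- r) F j t).
Proof.
move=> gF; elim: r => [|j r IH].
  by apply: good_ext (good_cst (lexx 0)) _ => t; rewrite big_nil.
by apply: good_ext (good_add (gF j) IH) _ => t; rewrite big_cons.
Qed.

Lemma good_mul F G : good F -> good G -> good (fun t => F t * G t).
Proof.
case=> nF F0 [c Fc] [nG G0 [c' Gc]]; split.
- exact: Nice_mul.
- by move=> t; rewrite mulr_ge0.
- by exists (c * c') => t; rewrite ler_pM.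
Qed.

Lemma draw_ext s F G t : (forall t, F t = G t) -> draw s st F t = draw s st G t.
Proof.
move=> FG; elim: s t => [|p s IH] t /=; first exact: FG.
congr Rintegral; apply/funext => x; by rewrite IH.
Qed.

Lemma draw_add s F G t : good F -> good G ->
  draw s st (fun t => F t + G t) t = draw s st F t + draw s st G t.
Proof.
move=> gF gG; elim: s t => [|p s IH] t //.
rewrite !drawE.
rewrite (_ : (fun x => draw s st _ (upd t p x)) =
   (fun x => draw s st F (upd t p x) + draw s st G (upd t p x))); last first.
  by apply/funext => x; rewrite IH.
apply: Ex_D; first exact: vstp.
- exact: (good_meas t p (draw_good s gF)).
- exact: (good_bnd t p (draw_good s gF)).
- exact: (good_meas t p (draw_good s gG)).
- exact: (good_bnd t p (draw_good s gG)).
Qed.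

Lemma draw_cst s c t : draw s st (fun _ => c) t = c.
Proof.
elim: s t => [|p s IH] t //; rewrite drawE.
rewrite (_ : (fun x => _) = (fun _ => c)); last by apply/funext => x; rewrite IH.
by rewrite /Exp Ex_cst //; exact: vstp.
Qed.

Lemma draw_le s F G t : good F -> good G -> (forall t, F t <= G t) ->
  draw s st F t <= draw s st G t.
Proof.
move=> gF gG FG; elim: s t => [|p s IH] t; first exact: FG.
rewrite !drawE; apply: Ex_le; first exact: vstp.
- exact: (good_meas t p (draw_good s gF)).
- exact: (good_bnd t p (draw_good s gF)).
- exact: (good_meas t p (draw_good s gG)).
- exact: (good_bnd t p (draw_good s gG)).
- by move=> z _; exact: IH.
Qed.

Lemma draw_sum (J : Type) (r : seq J) s (F : J -> Th -> R) t :
  (forall j, good (F j)) ->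
  draw s st (fun t => \sum_(j <- r) F j t) t = \sum_(j <- r) draw s st (F j) t.
Proof.
move=> gF; elim: r => [|j r IH].
  transitivity (draw s st (fun _ => 0) t); first by apply: draw_ext => u; rewrite big_nil.
  by rewrite draw_cst big_nil.
rewrite big_cons -IH -draw_add //; last exact: good_sum.
by apply: draw_ext => u; rewrite big_cons.
Qed.


Lemma upd_comm t p q x z : p != q -> upd (upd t q x) p z = upd (upd t p z) q x.
Proof.
move=> pq; apply/funext => i; apply/funext => k; rewrite /upd.
case: eqP => [->|_]; last by [].
by rewrite (negbTE pq).
Qed.

Lemma upd_same t q x : upd t q x q.1 q.2 = x.
Proof. by rewrite /upd -surjective_pairing eqxx. Qed.

Lemma upd_other t p q z : p != q -> upd t p z q.1 q.2 = t q.1 q.2.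
Proof. by move=> pq; rewrite /upd -surjective_pairing eq_sym (negbTE pq). Qed.

Lemma draw_inv s F t q x : q \notin s -> (forall u z, F (upd u q z) = F u) ->
  draw s st F (upd t q x) = draw s st F t.
Proof.
move=> qs Fq; elim: s t qs => [|p s IH] t qs; first exact: Fq.
move: qs; rewrite in_cons negb_or => /andP[qp qs].
rewrite !drawE; congr (Exp p _); apply/funext => z.
by rewrite upd_comm 1?eq_sym // IH.
Qed.

Lemma draw_out s (h : R -> R) g q t : q \notin s -> good g ->
  draw s st (fun u => h (u q.1 q.2) * g u) t = h (t q.1 q.2) * draw s st g t.
Proof.
move=> qs gg; elim: s t qs => [|p s IH] t qs //.
move: qs; rewrite in_cons negb_or => /andP[qp qs].
rewrite !drawE.
rewrite (_ : (fun x => _) = (fun x => h (t q.1 q.2) * draw s st g (upd t p x))).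
  rewrite /Exp Ex_Z //; try exact: vstp.
  - exact: (good_meas t p (draw_good s gg)).
  - exact: (good_bnd t p (draw_good s gg)).
apply/funext => z; rewrite IH // upd_other // eq_sym //.
Qed.

Lemma draw_fact s (h : R -> R) g q t : q \in s -> uniq s -> good g ->
  (forall u z, g (upd u q z) = g u) -> measurable_fun setT h -> bnd01 h ->
  draw s st (fun u => h (u q.1 q.2) * g u) t = Exp q h * draw s st g t.
Proof.
move=> qs us gg gq mh bh; elim: s t qs us => [|p s IH] t qs us //.
case/andP: us => ps us.
rewrite !drawE.
have [pq|pq] := eqVneq p q.
  subst p.
  have E1 : (fun x => draw s st (fun u => h (u q.1 q.2) * g u) (upd t q x)) =
            (fun x => draw s st g t * h x).
    apply/funext => z; rewrite draw_out // upd_same draw_inv //.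
    by rewrite mulrC.
  have E2 : (fun x => draw s st g (upd t q x)) = (fun _ => draw s st g t).
    by apply/funext => z; rewrite draw_inv.
  rewrite E1 E2 /Exp Ex_Z; first 1 last.
  - exact: vstp.
  - exact: mh.
  - exact: bh.
  by rewrite Ex_cst; [rewrite mulrC | exact: vstp].
move: qs; rewrite in_cons eq_sym (negbTE pq) orFb => qs.
have E1 : (fun x => draw s st (fun u => h (u q.1 q.2) * g u) (upd t p x)) =
          (fun x => Exp q h * draw s st g (upd t p x)).
  by apply/funext => z; rewrite IH.
rewrite E1 /Exp Ex_Z; first by [].
- exact: vstp.
- exact: (good_meas t p (draw_good s gg)).
- exact: (good_bnd t p (draw_good s gg)).
Qed.

End Draw.


Section Alg.
Variables (R : realType) (N K : nat).
Notation Th := ('I_N -> 'I_K.+1 -> R).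
Variables (W : 'M[R]_N) (eta : R) (mu : 'I_K.+1 -> R).
Hypothesis W0 : forall i j, 0 <= W i j.
Hypothesis W1 : forall i, \sum_j W i j = 1.
Hypothesis eta0 : 0 < eta.
Hypothesis mu01 : forall j, 0 <= mu j <= 1.

Definition valid (st : state R N K) := forall i k, bok (alpha_ st i k) (beta_ st i k).

Lemma valid_init : valid (init_state R N K).
Proof. by move=> i k; split. Qed.

Lemma valid_update st A Y : valid st -> valid (update W eta st A Y).
Proof.
move=> vs i k.
split => /=.
- rewrite -[X in X <= _](W1 i); apply: ler_sum => j _.
  rewrite -[X in X <= _]mulr1; apply: ler_wpM2l => //.
  have [aj _] := vs j k.
  rewrite -[X in X <= _]addr0; apply: lerD => //.
  by rewrite !mulr_ge0 ?(ltW eta0) //; case: (Y j).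
- rewrite -[X in X <= _](W1 i); apply: ler_sum => j _.
  rewrite -[X in X <= _]mulr1; apply: ler_wpM2l => //.
  have [_ bj] := vs j k.
  rewrite -[X in X <= _]addr0; apply: lerD => //.
  by rewrite !mulr_ge0 ?(ltW eta0) //; case: (Y j); rewrite ?subrr ?subr0.
Qed.

Lemma rew_prob_ge0 (A : 'I_N -> 'I_K.+1) (Y : {ffun 'I_N -> bool}) : 0 <= rew_prob mu A Y.
Proof.
rewrite /rew_prob; apply: prodr_ge0 => i _; have /andP[m0 m1] := mu01 (A i).
by case: (Y i); rewrite ?subr_ge0.
Qed.

Lemma rew_prob_sum1 (A : 'I_N -> 'I_K.+1) : \sum_(Y : {ffun 'I_N -> bool}) rew_prob mu A Y = 1.
Proof.
rewrite /rew_prob -(bigA_distr_bigA (fun i (b : bool) => if b then mu (A i) else 1 - mu (A i))) /=.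
by apply: big1 => i _; rewrite big_bool /= addrC subrK.
Qed.

Lemma choose_max (t : Th) i j : t i j <= t i (Defs.choose t i).
Proof. by rewrite /Defs.choose; case: arg_maxP => //= m _ Hm; exact: Hm. Qed.

Lemma pathE_ext T st F G : (forall rs, F rs = G rs) ->
  pathE W eta mu T st F = pathE W eta mu T st G.
Proof.
elim: T st F G => [|T IH] st F G FG /=; first exact: FG.
rewrite /draw_all; apply: draw_ext => t.
apply: eq_bigr => Y _; congr (_ * _); apply: IH => rs; exact: FG.
Qed.

Lemma good_choose (Psi : ('I_N -> 'I_K.+1) -> R) : (forall a, 0 <= Psi a) ->
  good (fun t : Th => Psi (Defs.choose t)).
Proof.
move=> P0; split => //; first exact: Nice_choose.
exists (\sum_(a : {ffun 'I_N -> 'I_K.+1}) Psi a) => t.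
rewrite (bigD1 [ffun i => Defs.choose t i]) //=.
have -> : Psi (Defs.choose t) = Psi [ffun i => Defs.choose t i].
  by congr Psi; apply/funext => i; rewrite ffunE.
by rewrite lerDl; apply: sumr_ge0.
Qed.


Section Sv.
Variable w : state R N K -> Th -> ('I_N -> 'I_K.+1) -> R.
Hypothesis hw : forall st, valid st -> good (fun t => w st t (Defs.choose t)).

Definition Sv (rs : seq (round R N K)) :=
  \sum_(r <- rs) w (r_state r) (r_theta r) (r_act r).

Definition Xf T st (A : 'I_N -> 'I_K.+1) :=
  \sum_(Y : {ffun 'I_N -> bool}) rew_prob mu A Y * pathE W eta mu T (update W eta st A Y) Sv.

Lemma step_formula T st c : 0 <= c ->
  (forall st', valid st' -> forall c, 0 <= c -> pathE W eta mu T st' (fun rs => c + Sv rs) =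
     c + pathE W eta mu T st' Sv) -> valid st ->
  pathE W eta mu T.+1 st (fun rs => c + Sv rs) =
  draw_all st (fun t => (c + w st t (Defs.choose t)) + Xf T st (Defs.choose t)).
Proof.
move=> c0 IHa vs; cbn [pathE]; rewrite /draw_all; apply: draw_ext => t.
set A := Defs.choose t.
transitivity (\sum_(Y : {ffun 'I_N -> bool}) rew_prob mu A Y *
   ((c + w st t A) + pathE W eta mu T (update W eta st A Y) Sv)).
  apply: eq_bigr => Y _; congr (_ * _); rewrite -IHa; first last.
  - by rewrite addr_ge0 //; case: (hw vs) => _ + _; apply.
  - exact: valid_update.
  by apply: pathE_ext => rs; rewrite /Sv big_cons /= addrA.
under eq_bigr do rewrite mulrDr.
by rewrite big_split /= -big_distrl /= rew_prob_sum1 mul1r.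
Qed.

Lemma Xf_good T st : valid st ->
  (forall st', valid st' -> 0 <= pathE W eta mu T st' Sv) ->
  good (fun t => Xf T st (Defs.choose t)).
Proof.
move=> vs Hb; apply: good_choose => a; apply: sumr_ge0 => Y _.
by rewrite mulr_ge0 ?rew_prob_ge0 ?Hb //; exact: valid_update.
Qed.

Lemma path_ind T : forall st, valid st ->
  (forall c, 0 <= c -> pathE W eta mu T st (fun rs => c + Sv rs) = c + pathE W eta mu T st Sv) /\
  0 <= pathE W eta mu T st Sv.
Proof.
elim: T => [|T IH] st vs.
  by split => [c _|] /=; rewrite /Sv big_nil ?addr0.
have IHa : forall st', valid st' -> forall c, 0 <= c -> pathE W eta mu T st' (fun rs => c + Sv rs) =
     c + pathE W eta mu T st' Sv by move=> st' v'; case: (IH st' v').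
have IHb : forall st', valid st' -> 0 <= pathE W eta mu T st' Sv by move=> st' v'; case: (IH st' v').
have E0 : pathE W eta mu T.+1 st Sv = draw_all st (fun t => w st t (Defs.choose t) + Xf T st (Defs.choose t)).
  rewrite (pathE_ext _ _ (G := fun rs => 0 + Sv rs)); last by move=> rs; rewrite add0r.
  rewrite step_formula; [|exact: lexx|exact: IHa|exact: vs]; rewrite /draw_all; apply: draw_ext => t; by rewrite add0r.
have gwx := good_add (hw vs) (Xf_good vs IHb).
split.
- move=> c c0; rewrite step_formula; [|exact: c0|exact: IHa|exact: vs].
  rewrite E0 /draw_all.
  transitivity (draw (enum {: 'I_N * 'I_K.+1}) st
     (fun t => c + (w st t (Defs.choose t) + Xf T st (Defs.choose t))) (fun _ _ => 0)).
    by apply: draw_ext => t; rewrite addrA.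
  rewrite (@draw_add _ _ _ st vs _ (fun _ => c) (fun t => w st t (Defs.choose t) + Xf T st (Defs.choose t))); [|exact: good_cst|exact: gwx].
  by rewrite draw_cst.
- rewrite E0; case: (draw_good vs (enum {: 'I_N * 'I_K.+1}) gwx) => _ + _.
  by apply.
Qed.

Lemma step0 T st : valid st ->
  pathE W eta mu T.+1 st Sv =
  draw_all st (fun t => w st t (Defs.choose t) + Xf T st (Defs.choose t)).
Proof.
move=> vs.
rewrite (pathE_ext _ _ (G := fun rs => 0 + Sv rs)); last by move=> rs; rewrite add0r.
rewrite step_formula; [|exact: lexx| |exact: vs].
  by rewrite /draw_all; apply: draw_ext => t; rewrite add0r.
by move=> st' v'; case: (path_ind T v').
Qed.

End Sv.

Lemma compare (wL wR : state R N K -> Th -> ('I_N -> 'I_K.+1) -> R)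
  (hL : forall st, valid st -> good (fun t => wL st t (Defs.choose t)))
  (hR : forall st, valid st -> good (fun t => wR st t (Defs.choose t)))
  (key : forall st, valid st -> draw_all st (fun t => wL st t (Defs.choose t)) <=
                                draw_all st (fun t => wR st t (Defs.choose t))) :
  forall T st, valid st -> pathE W eta mu T st (Sv wL) <= pathE W eta mu T st (Sv wR).
Proof.
elim => [|T IH] st vs.
  by rewrite /= /Sv !big_nil.
rewrite !step0 // /draw_all.
have bL : forall st', valid st' -> 0 <= pathE W eta mu T st' (Sv wL).
  by move=> st' v'; case: (path_ind hL T v').
have bR : forall st', valid st' -> 0 <= pathE W eta mu T st' (Sv wR).
  by move=> st' v'; case: (path_ind hR T v').
rewrite draw_add; [|exact: vs|exact: hL|exact: Xf_good].
rewrite draw_add; [|exact: vs|exact: hR|exact: Xf_good].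
apply: lerD; first exact: key.
apply: draw_le; [exact: vs|exact: Xf_good|exact: Xf_good|].
move=> t; apply: ler_sum => Y _; apply: ler_wpM2l; first exact: rew_prob_ge0.
by apply: IH; exact: valid_update.
Qed.

End Alg.


Section Key.
Variables (R : realType) (N K : nat).
Notation Th := ('I_N -> 'I_K.+1 -> R).
Notation leb := (@lebesgue_measure R).

Lemma meas_le_ind (y : R) : measurable_fun setT (fun z : R => (z <= y)%R%:R : R).
Proof.
rewrite (_ : (fun z => _) = \1_[set z : R | z <= y]).
  apply: measurable_indic; rewrite -[X in measurable X]setTI.
  by apply: measurable_fun_le.
apply/funext => z; rewrite indicE.
have [Px|Px] := boolP (z <= y); first by rewrite mem_set.
by rewrite memNset //= (negbTE Px).
Qed.

Lemma meas_lt_ind (y : R) : measurable_fun setT (fun z : R => (y < z)%R%:R : R).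
Proof.
rewrite (_ : (fun z => _) = (fun z => 1 - (z <= y)%R%:R)).
  by apply: measurable_funB; [exact: measurable_cst | exact: meas_le_ind].
by apply/funext => z; rewrite ltNge; case: (z <= y); rewrite ?subrr ?subr0.
Qed.

Lemma bnd_ind (P : R -> bool) : bnd01 (fun z => (P z)%:R : R).
Proof. by exists 1 => z _; case: (P z); rewrite ?normr1 ?normr0. Qed.

Lemma good_ind (P : Th -> bool) : NiceP P -> good (fun t => (P t)%:R).
Proof.
move=> hP; split; first exact: Nice_ind.
- by move=> t; exact: ler0n.
- by exists 1 => t; case: (P t).
Qed.

Lemma nm1 (y : R) : 0 < y -> 0 < (2 * y + 1) / 3. Proof. move=> *; lra. Qed.
Lemma nm2 (y : R) : y < 1 -> 0 < 1 - (y + 2) / 3. Proof. move=> *; lra. Qed.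
Lemma nm3 (y : R) : 0 < y -> 0 <= (2 * y + 1) / 3. Proof. move=> *; lra. Qed.
Lemma nm4 (y : R) : y < 1 -> (2 * y + 1) / 3 < (y + 2) / 3. Proof. move=> *; lra. Qed.
Lemma nm5 (y : R) : y < 1 -> (y + 2) / 3 <= 1. Proof. move=> *; lra. Qed.
Lemma nm6 (y z : R) : y < 1 -> (2 * y + 1) / 3 <= z -> y < z. Proof. move=> *; lra. Qed.
Lemma nm7 (y : R) : y < 1 -> (y + 2) / 3 < 1. Proof. move=> *; lra. Qed.

Variable st : state R N K.
Hypothesis vst : forall i k, bok (alpha_ st i k) (beta_ st i k).
Variable y : R.
Hypothesis y0 : 0 < y.
Hypothesis y1 : y < 1.

Lemma G1_Exp i : G1 st i y = Exp st (i, ord0) (fun z => (y < z)%R%:R).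
Proof.
rewrite /G1 /Defs.beta_prob Rintegral_mkcondl /Exp /Ex.
apply: eq_Rintegral => z; rewrite inE /= in_itv /= => /andP[z0 z1].
rewrite /patch.
have [yz|yz] := boolP (y < z).
  by rewrite mem_set /= ?in_itv /= ?yz ?z1 // mulr1.
by rewrite memNset ?mulr0 //= in_itv /= (negbTE yz).
Qed.

Lemma Exp_pos i : 0 < Exp st (i, ord0) (fun z => (y < z)%R%:R).
Proof.
have [a1 b1] := vst i ord0.
have B0 := beta_fun_gt0 a1 b1.
rewrite /Exp /Ex /=.
apply: (@int_pos _ _ (Defs.beta_fun (alpha_ st i ord0) (beta_ st i ord0))^-1
  ((((2 * y + 1) / 3) `^ (alpha_ st i ord0 - 1) * (1 - (y + 2) / 3) `^ (beta_ st i ord0 - 1)) / Defs.beta_fun (alpha_ st i ord0) (beta_ st i ord0))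
  ((2 * y + 1) / 3) ((y + 2) / 3)).
- by apply: measurable_funM; [exact: pdf_meas | exact: meas_lt_ind].
- move=> z zz; apply/andP; split.
    by apply: mulr_ge0; [exact: pdf_ge0 (vst i ord0) | case: (y < z)%R].
  case: (y < z)%R; first by rewrite mulr1; exact: pdf_le (vst i ord0) zz.
  by rewrite mulr0 invr_ge0; exact: ltW.
- apply: divr_gt0 => //; apply: mulr_gt0; apply: powR_gt0; [exact: nm1 | exact: nm2].
- exact: nm3.
- exact: nm4.
- exact: nm5.
- move=> z /andP[uz zv].
  have -> : y < z by exact: nm6 uz.
  rewrite mulr1 /Defs.beta_pdf; apply: ler_wpM2r; first by rewrite invr_ge0 ltW.
  apply: kernel_lb => //; [exact: nm1 | exact: nm7].
Qed.

Lemma Exp_sum1 i : Exp st (i, ord0) (fun z => (z <= y)%R%:R) + Exp st (i, ord0) (fun z => (y < z)%R%:R) = 1.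
Proof.
rewrite /Exp -Ex_D; [|exact: vst|exact: meas_le_ind|exact: bnd_ind|exact: meas_lt_ind|exact: bnd_ind].
rewrite (_ : (fun z => _) = (fun _ => 1)); first by rewrite Ex_cst //; exact: vst.
by apply/funext => z; rewrite ltNge; case: (z <= y)%R; rewrite /= ?addr0 ?add0r.
Qed.


Lemma G_inv_ge0 i : 0 <= (G1 st i y)^-1 - 1.
Proof.
have GE : G1 st i y = Exp st (i, ord0) (fun z => (y < z)%R%:R) by exact: G1_Exp.
have G0 : 0 < G1 st i y by rewrite GE; exact: Exp_pos.
have H1E : Exp st (i, ord0) (fun z => (z <= y)%R%:R) = 1 - G1 st i y
  by rewrite GE -[X in X - _](Exp_sum1 i) addrK.
have Gle1 : G1 st i y <= 1.
  rewrite -subr_ge0 -H1E; apply: Ex_ge0; first exact: vst.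
  by move=> z _; case: (z <= y)%R.
by rewrite subr_ge0 invf_ge1.
Qed.

Variables (k : 'I_K.+1) (x : R).

Lemma key_i i :
  draw_all st (fun t => ((Defs.choose t i == k) && (muhat st i k <= x) && (t i k <= y))%:R)
  <= draw_all st (fun t => ((G1 st i y)^-1 - 1) * (Defs.choose t i == ord0)%:R).
Proof.
pose q := (i, @ord0 K).
pose h1 := fun z : R => (z <= y)%R%:R : R.
pose h2 := fun z : R => (y < z)%R%:R : R.
have GE : G1 st i y = Exp st q h2 by exact: G1_Exp.
have G0 : 0 < G1 st i y by rewrite GE; exact: Exp_pos.
have H1E : Exp st q h1 = 1 - G1 st i y by rewrite GE -(Exp_sum1 i) addrK.
have Gle1 : G1 st i y <= 1.
  rewrite -subr_ge0 -H1E; apply: Ex_ge0; first exact: vst.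
  by move=> z _; rewrite /h1; case: (z <= y)%R.
have Gi : 0 <= (G1 st i y)^-1 - 1 by rewrite subr_ge0 invf_ge1.
pose g := fun t : Th => ([forall j, (j != ord0) ==> (t i j <= y)%R])%:R : R.
have gg : good g.
  apply: good_ind; apply: NiceP_forall => j.
  apply: (NiceP_ext (NiceP_or (NiceP_cst (~~ (j != ord0))) (NiceP_lec i j y))).
  by move=> t; rewrite implybE.
have ginv : forall u z, g (upd u q z) = g u.
  move=> u z; rewrite /g; congr (_%:R).
  have E : forall j, j != ord0 -> upd u q z i j = u i j.
    by move=> j j0; rewrite /upd /q xpair_eqE eqxx /= (negbTE j0).
  congr (nat_of_bool _); apply/forallP/forallP => H j; move: (H j); case: (boolP (j != ord0)) => //= j0.
    by rewrite E.
  by rewrite E.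
have gh1 : good (fun t : Th => h1 (t q.1 q.2)).
  split; first exact: Nice_coord (meas_le_ind y).
  - by move=> t; exact: ler0n.
  - by exists 1 => t; rewrite lern1 leq_b1.
have gh2 : good (fun t : Th => ((G1 st i y)^-1 - 1) * h2 (t q.1 q.2)).
  apply: good_mul; first exact: good_cst.
  split; first exact: Nice_coord (meas_lt_ind y).
  - by move=> t; exact: ler0n.
  - by exists 1 => t; rewrite lern1 leq_b1.
have qin : q \in enum {: 'I_N * 'I_K.+1} by rewrite mem_enum.
have qu : uniq (enum {: 'I_N * 'I_K.+1}) by exact: enum_uniq.
have D0 : 0 <= draw_all st g.
  by case: (draw_good vst (enum {: 'I_N * 'I_K.+1}) gg) => _ + _; apply.
apply: (@le_trans _ _ (draw_all st (fun t => h1 (t q.1 q.2) * g t))).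
  apply: draw_le; first exact: vst.
  - apply: good_ind; apply: NiceP_and; last exact: NiceP_lec.
    by apply: NiceP_and; [exact: NiceP_choose | exact: NiceP_cst].
  - exact: good_mul.
  move=> t; have [/andP[/andP[/eqP ck _] tk]|_] := boolP (_ && _ && _).
    have all_le : forall j, t i j <= y.
      by move=> j; apply: le_trans (choose_max t i j) _; rewrite ck.
    rewrite /h1 /g /= all_le mul1r (_ : [forall j, _] = true) //.
    by apply/forallP => j; apply/implyP => _; exact: all_le.
  by rewrite mulr_ge0 // ler0n.
apply: (@le_trans _ _ (draw_all st (fun t => ((G1 st i y)^-1 - 1) * h2 (t q.1 q.2) * g t))); last first.
  apply: draw_le; first exact: vst.
  - exact: good_mul.
  - by apply: good_mul; [exact: good_cst | apply: good_ind; exact: NiceP_choose].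
  move=> t; rewrite -mulrA; apply: ler_wpM2l; first exact: Gi.
  rewrite /h2 /g /=.
  have [yt|] := boolP (y < t i ord0)%R; last by move=> _; rewrite mul0r ler0n.
  have [gt|] := boolP [forall j, (j != ord0) ==> (t i j <= y)%R]; last by move=> _; rewrite mulr0 ler0n.
  have -> : (Defs.choose t i == ord0) = true; last by rewrite mulr1.
  apply/eqP; apply/eqP/negPn/negP => m0.
  have := choose_max t i ord0; have := implyP (forallP gt (Defs.choose t i)) m0.
  move=> h3 h4; have := le_trans h4 h3; by rewrite leNgt yt.
have EA : draw_all st (fun t => h1 (t q.1 q.2) * g t) = Exp st q h1 * draw_all st g.
  exact: (draw_fact vst _ qin qu gg ginv (meas_le_ind y) (bnd_ind _)).
have mh2 : measurable_fun setT (fun z => ((G1 st i y)^-1 - 1) * h2 z).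
  by apply: measurable_funM; [exact: measurable_cst | exact: meas_lt_ind].
have bh2 : bnd01 (fun z => ((G1 st i y)^-1 - 1) * h2 z).
  exists ((G1 st i y)^-1 - 1) => z _; rewrite normrM ger0_norm // /h2.
  by case: (y < z)%R; rewrite ?normr1 ?normr0 ?mulr1 ?mulr0.
have EB : draw_all st (fun t => ((G1 st i y)^-1 - 1) * h2 (t q.1 q.2) * g t) =
   Exp st q (fun z => ((G1 st i y)^-1 - 1) * h2 z) * draw_all st g.
  exact: (draw_fact vst _ qin qu gg ginv mh2 bh2).
rewrite EA EB H1E /Exp Ex_Z; [|exact: vst|exact: meas_lt_ind|exact: bnd_ind].
rewrite -/(Exp st q h2) -GE (mulrBl (G1 st i y) ((G1 st i y)^-1) 1) mulVf ?mul1r; last exact: lt0r_neq0.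
exact: lexx.
Qed.

End Key.


Unset Implicit Arguments.

Theorem lemma5 (R : realType) (N K : nat) (e : rel 'I_N) (W : 'M[R]_N)
  (mu : 'I_K.+1 -> R) (eta : R) (k : 'I_K.+1) (x y : R) (T : nat) :
  gossip_matrix e W ->
  (forall j, 0 <= mu j <= 1) ->
  (forall j, j != ord0 -> mu j < mu ord0) ->
  (forall i j : 'I_K.+1, (0 < i)%N -> (i <= j)%N -> mu j <= mu i) ->
  0 < eta ->
  k != ord0 ->
  mu k < x -> x < y -> y < mu ord0 ->
  (1 <= T)%N ->
  pathE W eta mu T (init_state R N K)
    (fun rs => \sum_(i < N) \sum_(r <- rs)
       ((r_act r i == k) && (muhat (r_state r) i k <= x)
        && (r_theta r i k <= y))%:R)
  <=
  pathE W eta mu T (init_state R N K)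
    (fun rs => \sum_(i < N) \sum_(r <- rs)
       ((G1 (r_state r) i y)^-1 - 1) * (r_act r i == ord0)%:R).
Proof.
move=> [_ [W0 W1 _ _]] mu01 _ _ eta0 _ muk xy ymu _.
have y0 : 0 < y.
  have /andP[m0 _] := mu01 k; apply: le_lt_trans m0 _; exact: lt_trans muk xy.
have y1 : y < 1.
  have /andP[_ m1] := mu01 ord0; exact: lt_le_trans ymu m1.
pose wL := fun (st : state R N K) (t : 'I_N -> 'I_K.+1 -> R) (A : 'I_N -> 'I_K.+1) =>
  \sum_(i < N) (((A i == k) && (muhat st i k <= x) && (t i k <= y))%:R : R).
pose wR := fun (st : state R N K) (t : 'I_N -> 'I_K.+1 -> R) (A : 'I_N -> 'I_K.+1) =>
  \sum_(i < N) (((G1 st i y)^-1 - 1) * (A i == ord0)%:R : R).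
apply: (@le_trans _ _ (pathE W eta mu T (init_state R N K) (Sv wL))).
  by rewrite le_eqVlt; apply/orP; left; apply/eqP; apply: pathE_ext => rs;
    rewrite /Sv exchange_big.
apply: (@le_trans _ _ (pathE W eta mu T (init_state R N K) (Sv wR))); last first.
  by rewrite le_eqVlt; apply/orP; left; apply/eqP; apply: pathE_ext => rs;
    rewrite /Sv exchange_big.
apply: (compare W0 W1 eta0 mu01); last exact: valid_init.
- move=> st vs; apply: good_sum => i; apply: good_ind.
  apply: NiceP_and; last exact: NiceP_lec.
  by apply: NiceP_and; [exact: NiceP_choose | exact: NiceP_cst].
- move=> st vs; apply: good_sum => i; apply: good_mul.
    by apply: good_cst; exact: G_inv_ge0.
  by apply: good_ind; exact: NiceP_choose.
- move=> st vs; rewrite /draw_all.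
  rewrite (draw_sum vs); last first.
    move=> i; apply: good_ind; apply: NiceP_and; last exact: NiceP_lec.
    by apply: NiceP_and; [exact: NiceP_choose | exact: NiceP_cst].
  rewrite (draw_sum vs); last first.
    move=> i; apply: good_mul; first by apply: good_cst; exact: G_inv_ge0.
    by apply: good_ind; exact: NiceP_choose.
  apply: ler_sum => i _; exact: key_i.
Qed.
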